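(* Assume $\|\hat F'(y)-\hat F'(x)\|_F\le L_{\hat F}\|y-x\|$ for all $x,y\in\mathcal F$, and that there is $\mu>0$ with $\sigma_{\min}(\hat F'(x)^* )\ge\sqrt\mu$ for all $x\in\mathcal F$. Let $\{x_k\}$ be generated by Scheme 1 with $\tau_k=\hat f_1(x_k)$. Then for all $k\in\mathbb Z_+$: $$\hat f_1(x_{k+1})\le\varepsilon_k+\begin{cases}\frac{\hat f_1(x_k)}2+\frac{L_{\hat F}}{\mu}\hat f_2(x_k)\le\frac34\hat f_1(x_k),&\text{if }\hat f_1(x_k)\le\frac{\mu}{4L_{\hat F}},\\ \hat f_1(x_k)-\frac{\mu}{16L_{\hat F}},&\text{otherwise.}\end{cases}$$ If moreover $L_k=L_{\hat F}$ is fixed while generating the sequence, then $$\hat f_1(x_{k+1})\le\varepsilon_k+\begin{cases}\frac{\hat f_1(x_k)}2+\frac{L_{\hat F}}{2\mu}\hat f_2(x_k)\le\frac34\hat f_1(x_k),&\text{if }\hat f_1(x_k)\le\frac{\mu}{2L_{\hat F}},\\ \hat f_1(x_k)-\frac{\mu}{8L_{\hat F}},&\text{otherwise.}\end{cases}$$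
   Context: Let $F:\mathbb R^n\to\mathbb R^m$ be smooth, $\hat F=\frac1{\sqrt m}F$ with Jacobian $\hat F'(x)$ and adjoint (transpose) $\hat F'(x)^*$; Euclidean norms, $\|\cdot\|_F$ Frobenius norm. $\hat f_1(x)=\|\hat F(x)\|$, $\hat f_2=\hat f_1^2$, $\phi(x,y)=\|\hat F(x)+\hat F'(x)(y-x)\|$, $\psi_{x,L,\tau}(y)=\frac\tau2+\frac{\phi(x,y)^2}{2\tau}+\frac L2\|y-x\|^2$, $T_{L,\tau}(x)=\arg\min_y\psi_{x,L,\tau}(y)$. $\mathcal F$ closed convex with nonempty interior, $\mathcal L(v)=\{x:\hat f_1(x)\le v\}$, $\mathcal L(\hat f_1(x_0))\subseteq\mathcal F$ and the generated sequence stays in $\mathcal F$. Scheme 1 (input $x_0$, a rule choosing $\varepsilon_k\ge0,\tau_k>0$, $L\in(0,L_{\hat F}]$, $L_0=L$): for $k=0,1,\dots$: choose $\tau_k,\varepsilon_k$; compute $x_{k+1}$ with $\psi_{x_k,L_k,\tau_k}(x_{k+1})-\psi_{x_k,L_k,\tau_k}(T_{L_k,\tau_k}(x_k))\le\varepsilon_k$ and $\hat f_1(x_k)\ge\psi_{x_k,L_k,\tau_k}(x_{k+1})$; if $\hat f_1(x_{k+1})>\psi_{x_k,L_k,\tau_k}(x_{k+1})$, set $L_k:=\min\{2L_k,2L_{\hat F}\}$ and repeat; otherwise $L_{k+1}=\max\{L_k/2,L\}$. *)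

(* Defs.v *)
From HB Require Import structures.
From mathcomp Require Import all_boot all_order all_algebra.
From mathcomp Require Import all_classical all_reals all_analysis.
Set Implicit Arguments. Unset Strict Implicit. Unset Printing Implicit Defensive.
Import Order.TTheory GRing.Theory Num.Theory.
Import numFieldNormedType.Exports.
Local Open Scope classical_set_scope.
Local Open Scope ring_scope.

Section Defs.
Variable R : realType.

Definition enorm (k : nat) (v : 'rV[R]_k) : R :=
  Num.sqrt (\sum_(i < k) v ord0 i ^+ 2).

Definition fnorm (p q : nat) (A : 'M[R]_(p, q)) : R :=
  Num.sqrt (\sum_(i < p) \sum_(j < q) A i j ^+ 2).

(* Smallest singular value of the linear map v |-> v *m A from R^p to R^q,
   defined variationally as inf_{||v|| = 1} ||v A|| . *)
Definition sigma_min (p q : nat) (A : 'M[R]_(p, q)) : R :=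
  inf [set enorm (v *m A) | v in [set v : 'rV[R]_p | enorm v = 1]].

Variables (n m : nat) (F : 'rV[R]_n -> 'rV[R]_m).

Definition Fhat (x : 'rV[R]_n) : 'rV[R]_m := (Num.sqrt m%:R)^-1 *: F x.

(* \hat F'(x), as the n x m matrix J with \hat F'(x) h = h *m J. *)
Definition Jhat (x : 'rV[R]_n) : 'M[R]_(n, m) := jacobian Fhat x.

Definition f1 (x : 'rV[R]_n) : R := enorm (Fhat x).
Definition f2 (x : 'rV[R]_n) : R := f1 x ^+ 2.

Definition phi (x y : 'rV[R]_n) : R := enorm (Fhat x + (y - x) *m Jhat x).

Definition psi (x : 'rV[R]_n) (L tau : R) (y : 'rV[R]_n) : R :=
  tau / 2 + phi x y ^+ 2 / (2 * tau) + L / 2 * enorm (y - x) ^+ 2.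

Definition T (L tau : R) (x : 'rV[R]_n) : 'rV[R]_n :=
  get [set y | forall z, psi x L tau y <= psi x L tau z].

Definition sublevel (v : R) : set 'rV[R]_n := [set x | f1 x <= v].

Definition step_ok (x : 'rV[R]_n) (Lk tau eps : R) (y : 'rV[R]_n) : Prop :=
  psi x Lk tau y - psi x Lk tau (T Lk tau x) <= eps /\
  f1 x >= psi x Lk tau y /\
  f1 y <= psi x Lk tau y.

Definition step_rejected (x : 'rV[R]_n) (Lk tau eps : R) (y : 'rV[R]_n) : Prop :=
  psi x Lk tau y - psi x Lk tau (T Lk tau x) <= eps /\
  f1 x >= psi x Lk tau y /\
  f1 y > psi x Lk tau y.

Definition trialL (LF L0 : R) (j : nat) : R := Num.min (2 ^+ j * L0) (2 * LF).

(* (x, eps, tau, Lacc) is generated by Scheme 1 with parameters L, LF: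
   Lstart k is the initial trial value at iteration k (Lstart 0 = L,
   Lstart (k+1) = max (Lacc k / 2) L); jk k is the number of doublings
   performed at iteration k, Lacc k the accepted value. *)
Definition scheme1 (L LF : R) (x : nat -> 'rV[R]_n) (eps tau Lacc : nat -> R)
    : Prop :=
  exists (Lstart : nat -> R) (jk : nat -> nat),
    Lstart 0%N = L /\
    (forall k, Lstart k.+1 = Num.max (Lacc k / 2) L) /\
    (forall k, 0 <= eps k /\ 0 < tau k) /\
    (forall k, Lacc k = trialL LF (Lstart k) (jk k)) /\
    (forall k, step_ok (x k) (Lacc k) (tau k) (eps k) (x k.+1)) /\
    (forall k i, (i < jk k)%N ->
       exists y, step_rejected (x k) (trialL LF (Lstart k) i) (tau k) (eps k) y).

End Defs.

(* Main.v *)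
Require Import Defs.
From HB Require Import structures.
From mathcomp Require Import all_boot all_order all_algebra.
From mathcomp Require Import all_classical all_reals all_analysis.
From mathcomp Require Import ring lra.
Import Order.TTheory GRing.Theory Num.Theory.
Import numFieldNormedType.Exports.
Local Open Scope classical_set_scope.
Local Open Scope ring_scope.



Section LA.
Set Implicit Arguments. Unset Strict Implicit.
Variable R : realFieldType.

Definition dot (k : nat) (u v : 'rV[R]_k) : R := (u *m v^T) ord0 ord0.
Arguments dot {k}.

Lemma dotE k (u v : 'rV[R]_k) : dot u v = \sum_(i < k) u ord0 i * v ord0 i.
Proof. by rewrite /dot !mxE; apply: eq_bigr => i _; rewrite mxE. Qed.

Lemma dotC k (u v : 'rV[R]_k) : dot u v = dot v u.
Proof. by rewrite !dotE; apply: eq_bigr => i _; rewrite mulrC. Qed.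

Lemma dotDl k (u w v : 'rV[R]_k) : dot (u + w) v = dot u v + dot w v.
Proof. by rewrite !dotE -big_split; apply: eq_bigr => i _; rewrite mxE mulrDl. Qed.

Lemma dotZl k a (u v : 'rV[R]_k) : dot (a *: u) v = a * dot u v.
Proof. by rewrite !dotE mulr_sumr; apply: eq_bigr => i _; rewrite mxE mulrA. Qed.

Lemma dotNl k (u v : 'rV[R]_k) : dot (- u) v = - dot u v.
Proof. by rewrite -scaleN1r dotZl mulN1r. Qed.

Lemma dotDr k (u w v : 'rV[R]_k) : dot v (u + w) = dot v u + dot v w.
Proof. by rewrite dotC dotDl !(dotC v). Qed.

Lemma dotZr k a (u v : 'rV[R]_k) : dot v (a *: u) = a * dot v u.
Proof. by rewrite dotC dotZl dotC. Qed.

Lemma dotNr k (u v : 'rV[R]_k) : dot v (- u) = - dot v u.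
Proof. by rewrite dotC dotNl dotC. Qed.

Lemma dot0l k (v : 'rV[R]_k) : dot 0 v = 0.
Proof. by rewrite /dot mul0mx mxE. Qed.

Lemma dot_mulmx p q (u : 'rV[R]_p) (A : 'M[R]_(p, q)) (v : 'rV[R]_q) :
  dot (u *m A) v = dot u (v *m A^T).
Proof. by rewrite /dot trmx_mul trmxK mulmxA. Qed.

Lemma dot_ge0 k (v : 'rV[R]_k) : 0 <= dot v v.
Proof. by rewrite dotE; apply: sumr_ge0 => i _; rewrite -expr2 sqr_ge0. Qed.

Lemma dot_eq0 k (v : 'rV[R]_k) : dot v v = 0 -> v = 0.
Proof.
rewrite dotE => /psumr_eq0P H; apply/matrixP => i j.
rewrite (ord1 i) mxE; apply/eqP; rewrite -sqrf_eq0 expr2; apply/eqP.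
by apply: H => // l _; rewrite -expr2 sqr_ge0.
Qed.

Lemma coercive_unit k (M : 'M[R]_k) c : 0 < c ->
  (forall v, c * dot v v <= dot (v *m M) v) -> M \in unitmx.
Proof.
move=> c0 H; rewrite -row_free_unit -kermx_eq0; apply/eqP/row_matrixP => i.
rewrite row0; set r := row i _.
have /eqP rM : r *m M == 0 by rewrite -sub_kermx row_sub.
apply: dot_eq0; have := H r; rewrite rM dot0l => h.
apply/eqP; rewrite eq_le dot_ge0 andbT -(pmulr_rle0 _ c0) //.
Qed.

Lemma exists_preimage n m (J : 'M[R]_(n, m)) mu (b : 'rV[R]_m) : 0 < mu ->
  (forall v : 'rV[R]_m, mu * dot v v <= dot (v *m J^T) (v *m J^T)) ->
  exists h : 'rV[R]_n, h *m J = b /\ mu * dot h h <= dot b b.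
Proof.
move=> mu0 H; set G := J^T *m J.
have GU : G \in unitmx.
  by apply: (coercive_unit mu0) => v; rewrite /G mulmxA dot_mulmx; exact: H.
set w := b *m invmx G.
have wG : w *m G = b by rewrite /w -mulmxA mulVmx // mulmx1.
exists (w *m J^T); split; first by rewrite -mulmxA -/G.
have e1 : dot (w *m J^T) (w *m J^T) = dot b w.
  by rewrite -(dot_mulmx (w *m J^T) J w) -mulmxA -/G wG.
have e2 : mu * dot w w <= dot b w by rewrite -e1; apply: H.
have e3 := dot_ge0 (mu *: w - b).
rewrite ?dotDl ?dotDr ?dotZl ?dotZr ?dotNl ?dotNr ?dotZl ?dotZr (dotC w b) in e3.
rewrite e1; nra.
Qed.

Lemma exists_min n m (J : 'M[R]_(n, m)) (b : 'rV[R]_m) c L : 0 < c -> 0 < L ->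
  exists hs : 'rV[R]_n, forall h,
    c * dot (b + hs *m J) (b + hs *m J) + L * dot hs hs <=
    c * dot (b + h *m J) (b + h *m J) + L * dot h h.
Proof.
move=> c0 L0.
set M := c *: (J *m J^T) + L%:M.
have MT : M^T = M.
  by rewrite /M linearD /= linearZ /= trmx_mul trmxK tr_scalar_mx.
have eM : forall h, dot (h *m M) h = c * dot (h *m J) (h *m J) + L * dot h h.
  move=> h; rewrite /M mulmxDr mul_mx_scalar -scalemxAr dotDl !dotZl.
  by rewrite mulmxA dot_mulmx trmxK.
set g := c *: (b *m J^T).
have key : forall h, c * dot (b + h *m J) (b + h *m J) + L * dot h h =
   c * dot b b + 2 * dot h g + dot (h *m M) h.
  move=> h; rewrite /g eM dotZr -dot_mulmx dotDl !dotDr (dotC b (h *m J)); ring.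
have coer : forall v, L * dot v v <= dot (v *m M) v.
  move=> v; rewrite eM lerDr; apply: mulr_ge0; [exact: ltW | exact: dot_ge0].
have MU : M \in unitmx by apply: (coercive_unit L0).
set hs := - (g *m invmx M).
have hsM : hs *m M = - g by rewrite /hs mulNmx -mulmxA mulVmx // mulmx1.
exists hs => h; rewrite !key.
clearbody hs g.
have [d ->] : exists d, h = hs + d by exists (h - hs); rewrite addrC subrK.
have e1 : dot (d *m M) hs = - dot d g by rewrite dot_mulmx MT hsM dotNr.
rewrite mulmxDl !dotDl !dotDr e1 hsM !dotNl (dotC g d) (dotC g hs).
have := coer d; have := dot_ge0 d; nra.
Qed.

End LA.



Lemma arith (R : realFieldType) (y e f K K0 D mu : R) : 0 < f -> 0 < mu -> 0 < K0 ->
  0 <= K -> K <= K0 -> 0 <= D -> mu * D <= f ^+ 2 ->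
  (forall t, y <= e + (f / 2 + (1 - t) ^+ 2 * f ^+ 2 / (2 * f) + K * (t ^+ 2 * D))) ->
  (f <= mu / (4 * K0) -> y <= e + (f / 2 + K0 / mu * f ^+ 2) /\
      f / 2 + K0 / mu * f ^+ 2 <= 3 / 4 * f) /\
  (~ f <= mu / (4 * K0) -> y <= e + (f - mu / (16 * K0))).
Proof.
move=> f0 mu0 K00 K0' KK0 D0 muD H.
set Dm := f ^+ 2 / mu.
have DDm : D <= Dm by rewrite /Dm ler_pdivlMr // mulrC.
have Hb : forall t, y <= e + (f / 2 + (1 - t) ^+ 2 * f / 2 + K0 * (t ^+ 2 * Dm)).
  move=> t; apply: (le_trans (H t)); rewrite lerD2l.
  have -> : (1 - t) ^+ 2 * f ^+ 2 / (2 * f) = (1 - t) ^+ 2 * f / 2.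
    by field; rewrite gt_eqF.
  rewrite lerD2l; apply: ler_pM => //; first by rewrite mulr_ge0 ?sqr_ge0.
  by apply: ler_wpM2l; rewrite ?sqr_ge0.
have eDm : K0 * Dm = K0 / mu * f ^+ 2 by rewrite /Dm; field; rewrite gt_eqF.
split.
  move=> hf; have h1 : y <= e + (f / 2 + K0 / mu * f ^+ 2).
    have := Hb 1; rewrite -eDm.
    by have -> : f / 2 + (1 - 1) ^+ 2 * f / 2 + K0 * (1 ^+ 2 * Dm) = f / 2 + K0 * Dm by ring.
  split => //.
  have hq : f * (K0 / mu) <= 1 / 4.
    have -> : 1 / 4 = mu / (4 * K0) * (K0 / mu) by field; rewrite !gt_eqF.
    by rewrite ler_pM2r // divr_gt0.
  have -> : K0 / mu * f ^+ 2 = f * (f * (K0 / mu)) by rewrite expr2; ring.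
  nra.
move=> /negP; rewrite -ltNge => hf.
set s := mu / K0.
have s0 : 0 < s by rewrite divr_gt0.
have := Hb (s / (4 * f)).
have -> : (1 - s / (4 * f)) ^+ 2 * f / 2 = f / 2 - s / 4 + s / (4 * f) * s / 8.
  by rewrite /s; field; rewrite !gt_eqF.
have -> : K0 * ((s / (4 * f)) ^+ 2 * Dm) = s / 16.
  by rewrite /s /Dm; field; rewrite !gt_eqF.
have -> : mu / (16 * K0) = s / 16 by rewrite /s; field; rewrite gt_eqF.
have t1 : s / (4 * f) <= 1.
  rewrite ler_pdivrMr ?mul1r ?mulr_gt0 //.
  move: hf; rewrite ltr_pdivrMr ?mulr_gt0 // /s => /ltW.
  by move=> hh; rewrite ler_pdivrMr //; lra.
move=> h; apply: (le_trans h); rewrite lerD2l.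
have : s / (4 * f) * s / 8 <= s / 8.
  by rewrite -mulrA; apply: ler_piMl => //; rewrite divr_ge0 // ltW.
lra.
Qed.


Section Main.
Variable R : realType.

Lemma enorm_def k (v : 'rV[R]_k) : enorm v = Num.sqrt (dot v v).
Proof. by rewrite /enorm dotE; congr Num.sqrt; apply: eq_bigr => i _; rewrite expr2. Qed.

Lemma enorm_sq k (v : 'rV[R]_k) : enorm v ^+ 2 = dot v v.
Proof. by rewrite enorm_def sqr_sqrtr // dot_ge0. Qed.

Lemma psiE n m (F : 'rV[R]_n -> 'rV[R]_m) x Lk tau h : tau != 0 ->
  psi F x Lk tau (x + h) = tau / 2 +
    1 / (2 * tau) * dot (Fhat F x + h *m Jhat F x) (Fhat F x + h *m Jhat F x)
    + Lk / 2 * dot h h.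
Proof.
move=> t0; rewrite /psi /phi (addrC x h) addrK !enorm_sq.
by field.
Qed.

End Main.

Theorem theorem3 (R : realType) (n m : nat) (F : 'rV[R]_n -> 'rV[R]_m)
  (Fset : set 'rV[R]_n) (LF L mu : R)
  (x : nat -> 'rV[R]_n) (eps tau Lacc : nat -> R) :
  (forall z, differentiable F z) ->
  closed Fset -> convex_set Fset -> (Fset°) !=set0 ->
  sublevel F (f1 F (x 0%N)) `<=` Fset ->
  (forall k, Fset (x k)) ->
  0 < LF -> 0 < L -> L <= LF ->
  (forall y z, Fset y -> Fset z ->
     fnorm (Jhat F z - Jhat F y) <= LF * enorm (z - y)) ->
  0 < mu ->
  (forall z, Fset z -> Num.sqrt mu <= sigma_min (Jhat F z)^T) ->
  scheme1 F L LF x eps tau Lacc ->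
  (forall k, tau k = f1 F (x k)) ->
  (forall k,
     (f1 F (x k) <= mu / (4 * LF) ->
        f1 F (x k.+1) <= eps k + (f1 F (x k) / 2 + LF / mu * f2 F (x k)) /\
        f1 F (x k) / 2 + LF / mu * f2 F (x k) <= 3 / 4 * f1 F (x k)) /\
     (~ (f1 F (x k) <= mu / (4 * LF)) ->
        f1 F (x k.+1) <= eps k + (f1 F (x k) - mu / (16 * LF)))) /\
  ((forall k, Lacc k = LF) ->
   forall k,
     (f1 F (x k) <= mu / (2 * LF) ->
        f1 F (x k.+1) <= eps k + (f1 F (x k) / 2 + LF / (2 * mu) * f2 F (x k)) /\
        f1 F (x k) / 2 + LF / (2 * mu) * f2 F (x k) <= 3 / 4 * f1 F (x k)) /\
     (~ (f1 F (x k) <= mu / (2 * LF)) ->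
        f1 F (x k.+1) <= eps k + (f1 F (x k) - mu / (8 * LF)))).
Proof.
move=> _ _ _ _ _ inF LF0 L0 LLF _ mu0 Hsig [Ls [jk [Ls0 [LsS [epstau [LaccE [Hok _]]]]]]] Htau.
have LsL : forall k, L <= Ls k.
  by case=> [|k]; [rewrite Ls0 | rewrite LsS le_max lexx orbT].
have Lpos : forall k, 0 < Lacc k.
  move=> k; rewrite LaccE /trialL lt_min; apply/andP; split.
    by rewrite mulr_gt0 ?exprn_gt0 // (lt_le_trans L0 (LsL k)).
  by rewrite mulr_gt0.
have Lle : forall k, Lacc k <= 2 * LF.
  by move=> k; rewrite LaccE /trialL ge_min lexx orbT.
have fpos : forall k, 0 < f1 F (x k).
  by move=> k; rewrite -Htau; case: (epstau k).
have main : forall k, exists D, 0 <= D /\ mu * D <= f1 F (x k) ^+ 2 /\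
   forall t, f1 F (x k.+1) <= eps k + (f1 F (x k) / 2 +
      (1 - t) ^+ 2 * f1 F (x k) ^+ 2 / (2 * f1 F (x k)) + Lacc k / 2 * (t ^+ 2 * D)).
  move=> k.
  set xk := x k; set f := f1 F xk; set b := Fhat F xk; set J := Jhat F xk.
  set Lk := Lacc k.
  have f0 : 0 < f by exact: fpos.
  have Cv : forall v : 'rV[R]_m, mu * dot v v <= dot (v *m J^T) (v *m J^T).
    move=> v; case: (eqVneq v 0) => [-> | v0]; first by rewrite mul0mx !dot0l mulr0.
    set s := enorm v.
    have dv : dot v v != 0 by apply/eqP => /dot_eq0; apply/eqP.
    have s0 : 0 < s.
      rewrite lt0r /s enorm_def sqrtr_ge0 andbT; apply/eqP => h.
      by move: dv; rewrite -enorm_sq enorm_def h expr2 mulr0 eqxx.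
    set u := s^-1 *: v.
    have uu : dot u u = 1.
      by rewrite /u dotZl dotZr -enorm_sq -/s; field; rewrite gt_eqF.
    have eu : enorm u = 1 by rewrite enorm_def uu sqrtr1.
    have hS := Hsig xk (inF k).
    have hinf : sigma_min J^T <= enorm (u *m J^T).
      apply: ge_inf; last by exists u.
      by exists 0 => y [w _ <-]; exact: sqrtr_ge0.
    have h1 := le_trans hS hinf.
    have h2 := ler_pM (sqrtr_ge0 mu) (sqrtr_ge0 mu) h1 h1.
    rewrite -expr2 sqr_sqrtr ?(ltW mu0) // -expr2 enorm_sq /u -scalemxAl dotZl dotZr in h2.
    have -> : dot v v = s ^+ 2 by rewrite /s enorm_sq.
    have e : dot (v *m J^T) (v *m J^T) = s ^+ 2 * (s^-1 * (s^-1 * dot (v *m J^T) (v *m J^T))).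
      by field; rewrite gt_eqF.
    rewrite e mulrC ler_pM2l //; exact: exprn_gt0.
  have [h0 [h0J h0b]] := @exists_preimage _ _ _ J mu b mu0 Cv.
  have bb : dot b b = f ^+ 2 by rewrite -enorm_sq.
  have c0 : 0 < 1 / (2 * f) by rewrite divr_gt0 // mulr_gt0.
  have L20 : 0 < Lk / 2 by rewrite divr_gt0 // Lpos.
  have [hs Hhs] := @exists_min _ _ _ J b _ _ c0 L20.
  have f0' : f != 0 by rewrite gt_eqF.
  have Hmin : forall z, psi F xk Lk f (xk + hs) <= psi F xk Lk f z.
    move=> z; have -> : z = xk + (z - xk) by rewrite addrC subrK.
    by rewrite !psiE // -!addrA lerD2l; exact: Hhs.
  have HT : forall z, psi F xk Lk f (T F Lk f xk) <= psi F xk Lk f z.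
    rewrite /T; exact: (getPex (P := [set y | forall z, psi F xk Lk f y <= psi F xk Lk f z])
                                (ex_intro _ (xk + hs) Hmin)).
  exists (dot h0 h0); split; first exact: dot_ge0.
  split; first by rewrite -bb.
  move=> t.
  have [hk1 [_ hk3]] := Hok k; rewrite Htau -/xk -/f -/Lk in hk1 hk3.
  apply: (le_trans hk3).
  have := HT (xk + (- t) *: h0); rewrite psiE // -scalemxAl h0J -/b -/J.
  have -> : b + (- t) *: b = (1 - t) *: b by rewrite scalerBl scale1r scaleNr.
  rewrite (dotZl (1 - t) b) (dotZr (1 - t) b b) bb (dotZl (- t) h0) (dotZr (- t) h0 h0) => hT.
  have -> : f / 2 + (1 - t) ^+ 2 * f ^+ 2 / (2 * f) + Lk / 2 * (t ^+ 2 * dot h0 h0)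
     = f / 2 + 1 / (2 * f) * ((1 - t) * ((1 - t) * f ^+ 2)) + Lk / 2 * (- t * (- t * dot h0 h0)).
    by field.
  lra.
split.
  move=> k; have [D [D0 [muD Hk]]] := main k.
  apply: (arith (K := Lacc k / 2) (K0 := LF) (D := D) (fpos k) mu0 LF0 _ _ D0 muD Hk).
    by rewrite divr_ge0 // ltW.
  by have := Lle k; lra.
move=> Lfix k; have [D [D0 [muD Hk]]] := main k.
have := arith (K := Lacc k / 2) (K0 := LF / 2) (fpos k) mu0 _ _ _ D0 muD Hk.
have -> : mu / (4 * (LF / 2)) = mu / (2 * LF) by field; rewrite gt_eqF.
have -> : LF / 2 / mu = LF / (2 * mu) by field; rewrite gt_eqF.
have -> : mu / (16 * (LF / 2)) = mu / (8 * LF) by field; rewrite gt_eqF.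
apply.
- by rewrite divr_gt0.
- by rewrite divr_ge0 // ltW.
- by rewrite Lfix.
Qed.
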